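(* Let $q$ be a prime power, let $F_1\subsetneq F_0\subseteq\mathbb{F}_q^n$ be linear codes, and let $G_E\in\mathbb{F}_q^{e\times n}$ have row space $E$ with $F_0\cap E=\{\underline{0}\}$. In the QSS scheme given by $\mathrm{ECSS}(F_0,F_1,G_E)$, when the combiner has prior access to all $e$ extension qudits, the secret can be recovered from every choice of $\tau$ qudits out of the $n$ original qudits (i.e. $J\cup\{n+1,\dots,n+e\}$ is authorized for every $J\subseteq[n]$ with $|J|=\tau$) if and only if $\tau\geq\tau_e$, where $$\tau_e=n-\min\{\mathrm{wt}(F_0\setminus F_1),\ \mathrm{wt}((F_1+E)^\perp\setminus(F_0+E)^\perp)\}+1.$$
   Context: For linear codes $L_1\subsetneq L_0\subseteq\mathbb{F}_q^n$, $\mathrm{wt}(L_0\setminus L_1)=\min\{\mathrm{wt}(\underline{c}):\underline{c}\in L_0,\ \underline{c}\notin L_1\}$ (Hamming weight); $L^\perp$ is the dual code. Let $F_0,F_1$ have dimensions $f_0,f_1$, and let $G_{F_0}=\begin{bmatrix}G_{F_0/F_1}\\ G_{F_1}\end{bmatrix}$ be a generator matrix of $F_0$ with $G_{F_1}$ generating $F_1$ and $G_{F_0/F_1}$ generating a complement of $F_1$ in $F_0$. The extended CSS code $\mathrm{ECSS}(F_0,F_1,G_E)$ is the CSS code of $C_0$ over $C_1$ where $C_0,C_1\subseteq\mathbb{F}_q^{n+e}$ are generated by $\begin{bmatrix}G_{F_0}&0\\ G_E&I_e\end{bmatrix}$ and $\begin{bmatrix}G_{F_1}&0\\ G_E&I_e\end{bmatrix}$;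 its encoding maps (up to normalization, extended linearly) $|\underline{s}\rangle$, $\underline{s}\in\mathbb{F}_q^{f_0-f_1}$, to $\sum_{\underline{r}_1\in\mathbb{F}_q^{f_1},\underline{r}_2\in\mathbb{F}_q^{e}}|[\,G_{F_0/F_1}^T\ G_{F_1}^T\ G_E^T\,](\underline{s};\underline{r}_1;\underline{r}_2)\rangle|\underline{r}_2\rangle$. The first $n$ qudits are the original qudits and the last $e$ the extension qudits; qudit $j$ is given to party $j\in[n+e]$. A set of parties is authorized if the secret can be recovered from their qudits. *)

(* Defs.v *)
From HB Require Import structures.
From mathcomp Require Import all_boot all_order all_algebra all_field.
Set Implicit Arguments. Unset Strict Implicit. Unset Printing Implicit Defensive.
Import Order.TTheory GRing.Theory Num.Theory.
Local Open Scope ring_scope.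

Definition hwt (F : finFieldType) (n : nat) (v : 'rV[F]_n) : nat :=
  #|[set i : 'I_n | v 0 i != 0]|.

(* Minimum weight of the vectors satisfying P (default n if none; all sets
   used below are nonempty under the theorem's hypotheses). *)
Definition minwt (F : finFieldType) (n : nat) (P : pred 'rV[F]_n) : nat :=
  \big[minn/n]_(v : 'rV[F]_n | P v) hwt v.

(* wt(L0 \ L1) for codes given as row spaces of L0 and L1. *)
Definition wt_diff (F : finFieldType) (n m0 m1 : nat)
  (L0 : 'M[F]_(m0, n)) (L1 : 'M[F]_(m1, n)) : nat :=
  minwt (fun v : 'rV[F]_n => (v <= L0)%MS && ~~ (v <= L1)%MS).

Definition in_dual (F : finFieldType) (n m : nat) (L : 'M[F]_(m, n))
  (v : 'rV[F]_n) : bool := L *m v^T == 0.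

Definition wt_dual_diff (F : finFieldType) (n m0 m1 : nat)
  (L0 : 'M[F]_(m0, n)) (L1 : 'M[F]_(m1, n)) : nat :=
  minwt (fun v : 'rV[F]_n => in_dual L1 v && ~~ in_dual L0 v).

(* tau_e = n - min{ wt(F0\F1), wt((F1+E)^perp \ (F0+E)^perp) } + 1, where
   F0 = rowspace [G01; G1], F1 = rowspace G1, E = rowspace GE. *)
Definition tau_e (F : finFieldType) (n k f1 e : nat)
  (G01 : 'M[F]_(k, n)) (G1 : 'M[F]_(f1, n)) (GE : 'M[F]_(e, n)) : nat :=
  (n - minn (wt_diff (col_mx G01 G1) G1)
            (wt_dual_diff (col_mx (col_mx G01 G1) GE) (col_mx G1 GE)) + 1)%N.

(* Computational basis states of N qudits of dimension q = #|F|: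
   configurations {ffun 'I_N -> F}.  Operators on a space with basis T are
   T -> T -> algC (matrix entries). *)

(* Configurations supported on A (basis of the subsystem of the qudits in A). *)
Definition supp_on (F : finFieldType) (N : nat) (A : {set 'I_N})
  (x : {ffun 'I_N -> F}) : bool := [forall i, (i \notin A) ==> (x i == 0)].

Definition confA (F : finFieldType) (N : nat) (A : {set 'I_N}) :=
  {x : {ffun 'I_N -> F} | supp_on A x}.

Definition is_density (S : finType) (rho : S -> S -> algC) : Prop :=
  [/\ forall s s', rho s' s = (rho s s')^*,
      forall v : S -> algC, 0 <= \sum_(s : S) \sum_(s' : S) (v s)^* * rho s s' * v s'
    & \sum_(s : S) rho s s = 1].

(* Encoded state  V rho V^dagger  for the encoding map V given by its matrix
   enc s y = <y| V |s>. *)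
Definition encode_state (F : finFieldType) (N : nat) (S : finType)
  (enc : S -> {ffun 'I_N -> F} -> algC) (rho : S -> S -> algC)
  (y y' : {ffun 'I_N -> F}) : algC :=
  \sum_(s : S) \sum_(s' : S) enc s y * rho s s' * (enc s' y')^*.

(* Partial trace over the qudits outside A. *)
Definition reduce (F : finFieldType) (N : nat) (A : {set 'I_N})
  (M : {ffun 'I_N -> F} -> {ffun 'I_N -> F} -> algC)
  (a a' : confA F A) : algC :=
  \sum_(b : confA F (~: A)) M (val a + val b) (val a' + val b).

(* A is authorized: there is a quantum channel (CPTP map, given by Kraus
   operators K i : (subsystem A) -> (secret space)) recovering every secret
   density operator from the reduced state on A. *)
Definition authorized (F : finFieldType) (N : nat) (S : finType)
  (enc : S -> {ffun 'I_N -> F} -> algC) (A : {set 'I_N}) : Prop :=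
  exists (m : nat) (K : 'I_m -> S -> confA F A -> algC),
    (forall a a' : confA F A,
        \sum_(i < m) \sum_(s : S) (K i s a)^* * K i s a' = (a == a')%:R) /\
    (forall rho : S -> S -> algC, is_density rho ->
       forall s s' : S,
         \sum_(i < m) \sum_(a : confA F A) \sum_(a' : confA F A)
            K i s a * @reduce F N A (encode_state enc rho) a a' * (K i s' a')^*
         = rho s s').

Definition ecss_conf (F : finFieldType) (n k f1 e : nat)
  (G01 : 'M[F]_(k, n)) (G1 : 'M[F]_(f1, n)) (GE : 'M[F]_(e, n))
  (s : 'rV[F]_k) (r1 : 'rV[F]_f1) (r2 : 'rV[F]_e) : {ffun 'I_(n + e) -> F} :=
  [ffun i => match split i with
             | inl j => (s *m G01 + r1 *m G1 + r2 *m GE) 0 j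
             | inr j => r2 0 j
             end].

(* Matrix of the (normalized) encoding  |s> |-> q^{-(f1+e)/2} sum_{r1,r2} |..>|r2>. *)
Definition ecss_enc (F : finFieldType) (n k f1 e : nat)
  (G01 : 'M[F]_(k, n)) (G1 : 'M[F]_(f1, n)) (GE : 'M[F]_(e, n))
  (s : 'rV[F]_k) (y : {ffun 'I_(n + e) -> F}) : algC :=
  (sqrtC ((#|F| ^ (f1 + e))%N%:R))^-1 *
  \sum_(r1 : 'rV[F]_f1) \sum_(r2 : 'rV[F]_e) (y == ecss_conf G01 G1 GE s r1 r2)%:R.

Definition with_ext (n e : nat) (J : {set 'I_n}) : {set 'I_(n + e)} :=
  (lshift e @: J) :|: [set rshift n i | i : 'I_e].

(* Main.v *)
Require Import Defs.
From HB Require Import structures.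
From mathcomp Require Import all_boot all_order all_algebra all_field.
From mathcomp Require Import ring zify.
Import GRing.Theory Num.Theory.
Local Open Scope ring_scope.
Set Implicit Arguments. Unset Strict Implicit. Unset Printing Implicit Defensive.

Lemma supp_onP (F : finFieldType) (N : nat) (A : {set 'I_N}) (x : {ffun 'I_N -> F}) :
  reflect (forall i, i \notin A -> x i = 0) (supp_on A x).
Proof.
apply: (iffP forallP) => H i.
  by move=> hi; move: (H i); rewrite hi => /eqP.
by apply/implyP => hi; rewrite H.
Qed.

Lemma supp_onD (F : finFieldType) (N : nat) (A : {set 'I_N}) (x y : {ffun 'I_N -> F}) :
  supp_on A x -> supp_on A y -> supp_on A (x + y).
Proof.
move=> /supp_onP hx /supp_onP hy; apply/supp_onP => i hi.
by rewrite ffunE hx // hy // addr0.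
Qed.

Lemma supp_onN (F : finFieldType) (N : nat) (A : {set 'I_N}) (x : {ffun 'I_N -> F}) :
  supp_on A x -> supp_on A (- x).
Proof.
move=> /supp_onP hx; apply/supp_onP => i hi.
by rewrite ffunE hx // oppr0.
Qed.

Lemma supp_onB (F : finFieldType) (N : nat) (A : {set 'I_N}) (x y : {ffun 'I_N -> F}) :
  supp_on A x -> supp_on A y -> supp_on A (x - y).
Proof. by move=> hx hy; apply: supp_onD => //; apply: supp_onN. Qed.

Lemma supp_on0 (F : finFieldType) (N : nat) (A : {set 'I_N}) :
  supp_on A (0 : {ffun 'I_N -> F}).
Proof. by apply/supp_onP => i _; rewrite ffunE. Qed.

Definition projA (F : finFieldType) (N : nat) (A : {set 'I_N}) (y : {ffun 'I_N -> F}) :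
  {ffun 'I_N -> F} := [ffun i => if i \in A then y i else 0].

Lemma supp_projA (F : finFieldType) (N : nat) (A : {set 'I_N}) (y : {ffun 'I_N -> F}) :
  supp_on A (projA A y).
Proof. by apply/supp_onP => i hi; rewrite ffunE (negbTE hi). Qed.

Lemma projA_split (F : finFieldType) (N : nat) (A : {set 'I_N}) (y : {ffun 'I_N -> F}) :
  projA A y + projA (~: A) y = y.
Proof.
by apply/ffunP => i; rewrite !ffunE inE; case: (i \in A); rewrite ?addr0 ?add0r.
Qed.

Lemma projA_sum (F : finFieldType) (N : nat) (A : {set 'I_N}) (a b : {ffun 'I_N -> F}) :
  supp_on A a -> supp_on (~: A) b -> projA A (a + b) = a /\ projA (~: A) (a + b) = b.
Proof.
move=> /supp_onP ha /supp_onP hb; split; apply/ffunP => i; rewrite !ffunE.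
  case: ifP => hi; first by rewrite hb ?addr0 // inE hi.
  by rewrite ha // hi.
rewrite inE; case: ifP => hi; first by rewrite ha ?add0r.
by rewrite hb // inE; move/negbT: hi; rewrite negbK.
Qed.

Definition cA0 (F : finFieldType) (N : nat) (A : {set 'I_N}) : confA F A :=
  exist _ 0 (@supp_on0 F N A).

Lemma sum_split (F : finFieldType) (N : nat) (A : {set 'I_N}) (f : {ffun 'I_N -> F} -> algC) :
  \sum_(a : confA F A) \sum_(b : confA F (~: A)) f (val a + val b) = \sum_y f y.
Proof.
rewrite pair_big /=.
pose h (p : confA F A * confA F (~: A)) := val p.1 + val p.2.
pose h' (y : {ffun 'I_N -> F}) : confA F A * confA F (~: A) :=
  (exist _ (projA A y) (supp_projA A y), exist _ (projA (~: A) y) (supp_projA (~: A) y)).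
symmetry; rewrite (reindex h) /=; last first.
  exists h' => [[a b] _ | y _].
    case: a b => [a ha] [b hb]; rewrite /h' /h /=.
    have [e1 e2] := projA_sum ha hb.
    by congr pair; apply: val_inj => /=.
  by rewrite /h /h' /= projA_split.
by apply: eq_bigr => -[a b] _.
Qed.

Lemma sum_shift (F : finFieldType) (N : nat) (A : {set 'I_N}) (c : {ffun 'I_N -> F})
  (f : {ffun 'I_N -> F} -> algC) : supp_on A c ->
  \sum_(b : confA F A) f (val b + c) = \sum_(b : confA F A) f (val b).
Proof.
move=> hc.
pose h (b : confA F A) : confA F A := exist _ (val b + c) (supp_onD (valP b) hc).
symmetry; rewrite (reindex_inj (h := h)) /=; last first.
  by move=> x y /(congr1 val) /= /addIr /val_inj.
by [].
Qed.

Definition Tm (F : finFieldType) (N : nat) (S : finType)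
  (enc : S -> {ffun 'I_N -> F} -> algC) (A : {set 'I_N}) (t t' : S) (a a' : confA F A) : algC :=
  \sum_(b : confA F (~: A)) enc t (val a + val b) * (enc t' (val a' + val b))^*.

Lemma reduce_lin (F : finFieldType) (N : nat) (S : finType)
  (enc : S -> {ffun 'I_N -> F} -> algC) (A : {set 'I_N}) rho a a' :
  @reduce F N A (encode_state enc rho) a a' = \sum_t \sum_t' rho t t' * Tm enc t t' a a'.
Proof.
rewrite /reduce /encode_state /Tm exchange_big; apply: eq_bigr => t _.
rewrite exchange_big; apply: eq_bigr => t' _; rewrite mulr_sumr.
by apply: eq_bigr => b _; rewrite [enc _ _ * _]mulrC -mulrA.
Qed.

Lemma no_recover (F : finFieldType) (N : nat) (S : finType)
  (enc : S -> {ffun 'I_N -> F} -> algC) (A : {set 'I_N}) r1 r2 :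
  authorized enc A -> is_density r1 -> is_density r2 ->
  (forall a a', @reduce F N A (encode_state enc r1) a a' = @reduce F N A (encode_state enc r2) a a') ->
  forall s s', r1 s s' = r2 s s'.
Proof.
case=> m [K [_ HK]] d1 d2 E s s'; rewrite -(HK r1 d1) -(HK r2 d2).
apply: eq_bigr => i _; apply: eq_bigr => a _; apply: eq_bigr => a' _.
by rewrite E.
Qed.

Lemma split_r (n e : nat) (j : 'I_e) : split (rshift n j) = inr j.
Proof. exact: (unsplitK (inr _ j)). Qed.
Lemma split_l (n e : nat) (j : 'I_n) : split (lshift e j) = inl j.
Proof. exact: (unsplitK (inl _ j)). Qed.

Lemma rowB (F : fieldType) (n : nat) (X Y : 'rV[F]_n) j : (X - Y) 0 j = X 0 j - Y 0 j.
Proof. by rewrite [LHS]mxE mxE. Qed.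
Lemma rowD (F : fieldType) (n : nat) (X Y : 'rV[F]_n) j : (X + Y) 0 j = X 0 j + Y 0 j.
Proof. by rewrite [LHS]mxE. Qed.

Lemma addr3B (V : zmodType) (a b c a' b' c' : V) :
  a + b + c - (a' + b' + c') = (a - a') + (b - b') + (c - c').
Proof. by rewrite opprD addrACA opprD (addrACA a b). Qed.

Lemma conf_sub (F : finFieldType) (n k f1 e : nat)
  (G01 : 'M[F]_(k, n)) (G1 : 'M[F]_(f1, n)) (GE : 'M[F]_(e, n)) s r1 r2 t u1 u2 :
  ecss_conf G01 G1 GE s r1 r2 - ecss_conf G01 G1 GE t u1 u2 =
  ecss_conf G01 G1 GE (s - t) (r1 - u1) (r2 - u2).
Proof.
apply/ffunP => i; rewrite !ffunE; case: (split i) => j; last by rewrite rowB.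
rewrite -rowB; congr (_ 0 j).
by rewrite !mulmxBl addr3B.
Qed.

Lemma conf_eq0 (F : finFieldType) (n k f1 e : nat)
  (G01 : 'M[F]_(k, n)) (G1 : 'M[F]_(f1, n)) (GE : 'M[F]_(e, n)) z1 z2 z3 :
  row_free (col_mx G01 G1) ->
  ecss_conf G01 G1 GE z1 z2 z3 = 0 -> [/\ z1 = 0, z2 = 0 & z3 = 0].
Proof.
move=> rf H.
have h3 : z3 = 0.
  apply/rowP => j; move: (congr1 (fun f : {ffun 'I_(n + e) -> F} => f (rshift n j)) H).
  by rewrite /= !ffunE split_r mxE.
have h12 : row_mx z1 z2 *m col_mx G01 G1 = 0 *m col_mx G01 G1.
  rewrite mul_row_col mul0mx; apply/rowP => j.
  move: (congr1 (fun f : {ffun 'I_(n + e) -> F} => f (lshift e j)) H).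
  by rewrite /= !ffunE split_l h3 mul0mx addr0 !mxE.
move/(row_free_inj rf): h12; rewrite -row_mx0 => /eq_row_mx [-> ->].
by [].
Qed.

Lemma conf_inj (F : finFieldType) (n k f1 e : nat)
  (G01 : 'M[F]_(k, n)) (G1 : 'M[F]_(f1, n)) (GE : 'M[F]_(e, n)) s r1 r2 t u1 u2 :
  row_free (col_mx G01 G1) ->
  ecss_conf G01 G1 GE s r1 r2 = ecss_conf G01 G1 GE t u1 u2 ->
  [/\ s = t, r1 = u1 & r2 = u2].
Proof.
move=> rf /eqP; rewrite -subr_eq0 conf_sub => /eqP /(conf_eq0 rf).
by case=> h1 h2 h3; split; apply/eqP; rewrite -subr_eq0; apply/eqP.
Qed.

Lemma enc_shift (F : finFieldType) (n k f1 e : nat)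
  (G01 : 'M[F]_(k, n)) (G1 : 'M[F]_(f1, n)) (GE : 'M[F]_(e, n)) s u1 u2 y :
  ecss_enc G01 G1 GE s y = ecss_enc G01 G1 GE 0 (y - ecss_conf G01 G1 GE s u1 u2).
Proof.
rewrite /ecss_enc; congr (_ * _).
rewrite [RHS](reindex_inj (addIr (- u1))); apply: eq_bigr => r1 _.
rewrite [RHS](reindex_inj (addIr (- u2))); apply: eq_bigr => r2 _.
have -> : ecss_conf G01 G1 GE 0 (r1 - u1) (r2 - u2) =
  ecss_conf G01 G1 GE s r1 r2 - ecss_conf G01 G1 GE s u1 u2 by rewrite conf_sub subrr.
by rewrite (inj_eq (addIr _)).
Qed.

Lemma enc_ge0 (F : finFieldType) (n k f1 e : nat)
  (G01 : 'M[F]_(k, n)) (G1 : 'M[F]_(f1, n)) (GE : 'M[F]_(e, n)) s y :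
  0 <= ecss_enc G01 G1 GE s y.
Proof.
rewrite /ecss_enc; apply: mulr_ge0; first by rewrite invr_ge0 sqrtC_ge0 ler0n.
by apply: sumr_ge0 => r1 _; apply: sumr_ge0 => r2 _; apply: ler0n.
Qed.

Lemma enc_conj (F : finFieldType) (n k f1 e : nat)
  (G01 : 'M[F]_(k, n)) (G1 : 'M[F]_(f1, n)) (GE : 'M[F]_(e, n)) s y :
  (ecss_enc G01 G1 GE s y)^* = ecss_enc G01 G1 GE s y.
Proof. exact/conj_Creal/ger0_real/enc_ge0. Qed.

Lemma enc_nz (F : finFieldType) (n k f1 e : nat)
  (G01 : 'M[F]_(k, n)) (G1 : 'M[F]_(f1, n)) (GE : 'M[F]_(e, n)) s y :
  ecss_enc G01 G1 GE s y != 0 -> exists r1 r2, y = ecss_conf G01 G1 GE s r1 r2.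
Proof.
move=> H.
case: (pickP (fun r : 'rV[F]_f1 * 'rV[F]_e => y == ecss_conf G01 G1 GE s r.1 r.2)).
  by move=> [r1 r2] /= /eqP ->; exists r1, r2.
move=> none; move: H; rewrite /ecss_enc big1 ?mulr0 ?eqxx // => r1 _.
by rewrite big1 // => r2 _; move: (none (r1, r2)) => /= ->.
Qed.

Lemma sum_pick1 (T : finType) (z : T) (g : T -> algC) :
  \sum_y (y == z)%:R * g y = g z.
Proof.
rewrite (bigD1 z) //= eqxx mul1r big1 ?addr0 // => y /negbTE ->.
by rewrite mul0r.
Qed.

Lemma enc_norm (F : finFieldType) (n k f1 e : nat)
  (G01 : 'M[F]_(k, n)) (G1 : 'M[F]_(f1, n)) (GE : 'M[F]_(e, n)) s :
  row_free (col_mx G01 G1) ->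
  \sum_y ecss_enc G01 G1 GE s y * (ecss_enc G01 G1 GE s y)^* = 1.
Proof.
move=> rf.
pose ind y : algC := \sum_(r1 : 'rV[F]_f1) \sum_(r2 : 'rV[F]_e)
   (y == ecss_conf G01 G1 GE s r1 r2)%:R.
pose c : algC := (sqrtC ((#|F| ^ (f1 + e))%N%:R))^-1.
have -> : \sum_y ecss_enc G01 G1 GE s y * (ecss_enc G01 G1 GE s y)^* =
          c ^+ 2 * \sum_y ind y * ind y.
  rewrite mulr_sumr; apply: eq_bigr => y _; rewrite enc_conj /ecss_enc -/c.
  by rewrite -/(ind y) expr2 mulrACA.
have -> : \sum_y ind y * ind y = \sum_(r1 : 'rV[F]_f1) \sum_(r2 : 'rV[F]_e) 1.
  rewrite /ind; under eq_bigr => y _ do rewrite mulr_suml; rewrite exchange_big.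
  apply: eq_bigr => r1 _; under eq_bigr => y _ do rewrite mulr_suml.
  rewrite exchange_big; apply: eq_bigr => r2 _.
  rewrite sum_pick1; rewrite (bigD1 r1) //= (bigD1 r2) //= eqxx.
  rewrite big1 ?addr0; last first.
    move=> r2' /negbTE ne; case: eqP => // /(conf_inj rf) [_ _ h].
    by rewrite h eqxx in ne.
  rewrite big1 ?addr0 // => r1' ne; apply: big1 => r2' _.
  case: eqP => // /(conf_inj rf) [_ h _].
  by rewrite h eqxx in ne.
rewrite sumr_const card_mx mul1n sumr_const card_mx mul1n -mulr_natr -natrM -expnD (addnC e).
have N0 : (#|F| ^ (f1 + e))%N%:R != 0 :> algC.
  have cF : (0 < #|F|)%N by apply/card_gt0P; exists 0.
  by rewrite pnatr_eq0 -lt0n expn_gt0 cF.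
by rewrite /c exprVn sqrtCK mulVf.
Qed.

Lemma inA_l (n e : nat) (J : {set 'I_n}) (j : 'I_n) :
  (lshift e j \in with_ext e J) = (j \in J).
Proof.
rewrite /with_ext in_setU mem_imset; last exact: lshift_inj.
case: (j \in J) => //=; apply/imsetP => -[i _ /eqP]; by rewrite eq_lrshift.
Qed.

Lemma inA_r (n e : nat) (J : {set 'I_n}) (i : 'I_e) :
  rshift n i \in with_ext e J.
Proof. by rewrite /with_ext in_setU; apply/orP; right; apply/imsetP; exists i. Qed.

Lemma sum_only (T : finType) (z : T) (g : T -> algC) :
  (forall y, y != z -> g y = 0) -> \sum_y g y = g z.
Proof. by move=> H; rewrite (bigD1 z) //= big1 ?addr0. Qed.

Lemma sum_enum (T : finType) (f : T -> algC) :
  \sum_(i < #|{: T}|) f (enum_val i) = \sum_x f x.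
Proof.
symmetry; rewrite (reindex (@enum_val T (mem {: T}))) //; apply: onW_bij; exact: enum_val_bij.
Qed.

Lemma alg1 (a c r p q : algC) : c^* = c ->
  a * (r * (p * q^*)) * c = r * ((a * p) * (c * q)^*).
Proof. by move=> h; rewrite rmorphM /= h; ring. Qed.

Lemma alg2 (u v r p : algC) : v^* = v ->
  r * ((u * p) * (v * p)^*) = r * (u * v * (p * p^*)).
Proof. by move=> h; rewrite rmorphM /= h; ring. Qed.

Lemma recover (F : finFieldType) (n k f1 e : nat)
  (G01 : 'M[F]_(k, n)) (G1 : 'M[F]_(f1, n)) (GE : 'M[F]_(e, n)) (J : {set 'I_n}) :
  row_free (col_mx G01 G1) ->
  (forall (s : 'rV[F]_k) (r1 : 'rV[F]_f1),
      (forall j, j \in J -> (s *m G01 + r1 *m G1) 0 j = 0) -> s = 0) ->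
  (forall s, exists u : 'rV[F]_f1 * 'rV[F]_e,
      supp_on (with_ext e J) (ecss_conf G01 G1 GE s u.1 u.2)) ->
  authorized (ecss_enc G01 G1 GE) (with_ext e J).
Proof.
move=> rf Hi Hii.
have U : forall s t (a : confA F (with_ext e J)) (b b' : confA F (~: with_ext e J)),
    ecss_enc G01 G1 GE s (val a + val b) != 0 ->
    ecss_enc G01 G1 GE t (val a + val b') != 0 -> s = t.
  move=> s t a b b' /enc_nz [r1 [r2 e1]] /enc_nz [u1 [u2 e2]].
  have hd : ecss_conf G01 G1 GE (s - t) (r1 - u1) (r2 - u2) = val b - val b'.
    by rewrite -conf_sub -e1 -e2 opprD addrACA subrr add0r.
  have hb : forall i, i \in with_ext e J -> (val b - val b') i = 0.
    move=> i hi; move: (valP b) (valP b') => /supp_onP hb1 /supp_onP hb2.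
    have hi' : i \notin ~: with_ext e J by rewrite in_setC negbK.
    by rewrite ffunE hb1 // ffunE hb2 // oppr0 addr0.
  have h2 : r2 - u2 = 0.
    apply/rowP => j; have := hb _ (inA_r J j); rewrite -hd ffunE split_r => ->.
    by rewrite mxE.
  apply/eqP; rewrite -subr_eq0; apply/eqP; apply: (Hi _ (r1 - u1)) => j hj.
  have := hb (lshift e j); rewrite inA_l hj -hd ffunE split_l h2 mul0mx addr0.
  by apply.
have [sig sigP] : {sig : confA F (with_ext e J) -> 'rV[F]_k |
    forall (a : confA F (with_ext e J)) (b : confA F (~: with_ext e J)) s,
    ecss_enc G01 G1 GE s (val a + val b) != 0 -> sig a = s}.
  exists (fun a => odflt 0 [pick s | [exists b : confA F (~: with_ext e J),
                        ecss_enc G01 G1 GE s (val a + val b) != 0]]).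
  move=> a b s h; case: pickP => [s' /existsP [b' h'] | none] /=.
    exact: (U _ _ _ _ _ h' h).
  by have := none s; case: existsP => // -[]; exists b.
pose u (s : 'rV[F]_k) : 'rV[F]_f1 * 'rV[F]_e :=
  odflt (0, 0) [pick u | supp_on (with_ext e J) (ecss_conf G01 G1 GE s u.1 u.2)].
have [dd ddS encd] : {dd : 'rV[F]_k -> {ffun 'I_(n + e) -> F} |
    forall s, supp_on (with_ext e J) (dd s) &
    forall s y, ecss_enc G01 G1 GE s (y + dd s) = ecss_enc G01 G1 GE 0 y}.
  exists (fun s => ecss_conf G01 G1 GE s (u s).1 (u s).2).
    move=> s; rewrite /u; case: pickP => [v hv | none] //=.
    by case: (Hii s) => v hv; rewrite none in hv.
  by move=> s y; rewrite (enc_shift _ _ _ s (u s).1 (u s).2) addrK.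
pose addA (x : confA F (with_ext e J)) s : confA F (with_ext e J) :=
  exist _ (val x + dd s) (supp_onD (valP x) (ddS s)).
have keyC : forall s t (x : confA F (with_ext e J)) (b : confA F (~: with_ext e J)),
    (sig (addA x s) == s)%:R * ecss_enc G01 G1 GE t (val (addA x s) + val b) =
    (t == s)%:R * ecss_enc G01 G1 GE 0 (val x + val b) :> algC.
  move=> s t x b.
  have ex : val (addA x s) + val b = (val x + val b) + dd s by rewrite /= addrAC.
  case: (eqVneq t s) => [-> | ne].
    rewrite ex encd mul1r.
    case: (eqVneq (ecss_enc G01 G1 GE 0 (val x + val b)) 0) => [-> | nz].
      by rewrite mulr0.
    by rewrite (sigP (addA x s) b s) ?eqxx ?mul1r // ex encd.
  rewrite mul0r.
  case: (eqVneq (ecss_enc G01 G1 GE t (val (addA x s) + val b)) 0) => [-> | nz].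
    by rewrite mulr0.
  by rewrite (sigP _ _ _ nz) (negbTE ne) mul0r.
pose Kx (x : confA F (with_ext e J)) s (a : confA F (with_ext e J)) : algC :=
  (sig a == s)%:R * (val a == val x + dd s)%:R.
exists #|{: confA F (with_ext e J)}|, (fun i => Kx (enum_val i)); split.
  move=> a a'.
  rewrite (sum_enum (fun x => \sum_s (Kx x s a)^* * Kx x s a')) exchange_big /=.
  rewrite (sum_only (z:=sig a)); last first.
    move=> s ns; apply: big1 => x _; rewrite /Kx eq_sym (negbTE ns) mul0r rmorph0 mul0r.
    by [].
  pose z := exist (supp_on (with_ext e J)) (val a - dd (sig a))
              (supp_onB (valP a) (ddS (sig a))) : confA F (with_ext e J).
  rewrite (sum_only (z:=z)); last first.
    move=> x nx; rewrite /Kx.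
    case: (eqVneq (val a) (val x + dd (sig a))) => [ex | ne]; last first.
      by rewrite mulr0 rmorph0 mul0r.
    case/eqP: nx; apply: val_inj; by rewrite /= ex addrK.
  rewrite /Kx /= subrK !eqxx !mul1r conjC_nat mul1r.
  case: (eqVneq a a') => [<- | ne]; first by rewrite !eqxx mulr1.
  have -> : (val a' == val a) = false.
    by apply/negbTE; apply: contra ne => /eqP /val_inj ->.
  by rewrite mulr0.
move=> rho drho s s'.
rewrite (sum_enum (fun x => \sum_a \sum_a' Kx x s a *
   @reduce F (n + e) (with_ext e J) (encode_state (ecss_enc G01 G1 GE) rho) a a' *
   (Kx x s' a')^*)).
transitivity (\sum_(x : confA F (with_ext e J)) rho s s' *
   \sum_(b : confA F (~: with_ext e J))
      ecss_enc G01 G1 GE 0 (val x + val b) * (ecss_enc G01 G1 GE 0 (val x + val b))^*).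
  apply: eq_bigr => x _.
  rewrite (sum_only (z:=addA x s)); last first.
    move=> a na; apply: big1 => a' _; rewrite /Kx.
    have -> : (val a == val x + dd s) = false.
      by apply/negbTE; apply: contra na => /eqP ea; apply/eqP; apply: val_inj.
    by rewrite mulr0 !mul0r.
  rewrite (sum_only (z:=addA x s')); last first.
    move=> a' na; rewrite /Kx.
    have -> : (val a' == val x + dd s') = false.
      by apply/negbTE; apply: contra na => /eqP ea; apply/eqP; apply: val_inj.
    by rewrite mulr0 rmorph0 mulr0.
  have eK : forall x0 s0, Kx x0 s0 (addA x0 s0) = (sig (addA x0 s0) == s0)%:R.
    by move=> x0 s0; rewrite /Kx /= eqxx mulr1.
  rewrite !eK conjC_nat.
  rewrite reduce_lin mulr_sumr mulr_suml.
  transitivity (\sum_t \sum_t' rho t t' * ((t == s)%:R * (t' == s')%:R *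
     \sum_(b : confA F (~: with_ext e J))
      ecss_enc G01 G1 GE 0 (val x + val b) * (ecss_enc G01 G1 GE 0 (val x + val b))^*)).
    apply: eq_bigr => t _; rewrite mulr_sumr mulr_suml; apply: eq_bigr => t' _.
    rewrite /Tm !mulr_sumr mulr_suml; apply: eq_bigr => b _.
    rewrite (@alg1 _ ((sig (addA x s') == s')%:R)); last exact: conjC_nat.
    rewrite (keyC s t x b) (keyC s' t' x b).
    rewrite (@alg2 _ ((t' == s')%:R)) //; exact: conjC_nat.
  rewrite (sum_only (z:=s)); last first.
    by move=> t nt; apply: big1 => t' _; rewrite (negbTE nt) !mul0r mulr0.
  rewrite (sum_only (z:=s')); last first.
    by move=> t' nt; rewrite (negbTE nt) mulr0 mul0r mulr0.
  by rewrite !eqxx !mul1r.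
rewrite -mulr_sumr.
rewrite (@sum_split F (n + e) (with_ext e J)
  (fun y => ecss_enc G01 G1 GE 0 y * (ecss_enc G01 G1 GE 0 y)^*)).
by rewrite enc_norm // mulr1.
Qed.



Lemma pick_J (n : nat) (S : {set 'I_n}) (t : nat) :
  (t <= #|S|)%N -> exists J : {set 'I_n}, J \subset S /\ #|J| = t.
Proof.
elim: t => [|t IH] lt.
  by exists set0; rewrite sub0set cards0.
have [J [sJ cJ]] := IH (ltnW lt).
have : ~~ (S \subset J).
  apply/negP => /subset_leq_card; rewrite cJ; move: lt; rewrite ltnNge => /negP; exact.
case/subsetPn => x xS xJ.
exists (x |: J); split; first by rewrite subUset sub1set xS.
by rewrite cardsU1 xJ cJ.
Qed.

Lemma hwt_le (F : finFieldType) (n : nat) (v : 'rV[F]_n) : (hwt v <= n)%N.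
Proof. by rewrite /hwt; apply: leq_trans (max_card _) _; rewrite card_ord. Qed.

Lemma hwt_supp (F : finFieldType) (n : nat) (v : 'rV[F]_n) (J : {set 'I_n}) :
  (forall j, j \in J -> v 0 j = 0) -> (hwt v <= n - #|J|)%N.
Proof.
move=> H; rewrite /hwt.
have -> : (n - #|J| = #|~: J|)%N by rewrite [#|~: J|]cardsCs setCK card_ord.
apply: subset_leq_card; apply/subsetP => j; rewrite !inE; apply: contra => hj.
by rewrite H.
Qed.

Lemma minwt_le (F : finFieldType) (n : nat) (P : pred 'rV[F]_n) v :
  P v -> (minwt P <= hwt v)%N.
Proof.
move=> Pv; rewrite /minwt.
have : v \in index_enum 'rV[F]_n by rewrite mem_index_enum.
elim: (index_enum _) => [//|x r IH]; rewrite inE big_cons.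
case/orP => [/eqP <- | vr]; first by rewrite Pv geq_minl.
case: (P x); last exact: IH.
by apply: leq_trans (geq_minr _ _) (IH vr).
Qed.

Lemma minwt_cases (F : finFieldType) (n : nat) (P : pred 'rV[F]_n) :
  minwt P = n \/ exists v, P v /\ minwt P = hwt v.
Proof.
rewrite /minwt; apply: (big_ind (fun x => x = n \/ exists v, P v /\ x = hwt v)).
- by left.
- move=> x y hx hy; case: (leqP x y) => h.
    by [].
  by [].
- by move=> v Pv; right; exists v.
Qed.

Lemma minwt_ex (F : finFieldType) (n : nat) (P : pred 'rV[F]_n) :
  ((exists v, P v) \/ (minwt P < n)%N) -> exists v, P v /\ minwt P = hwt v.
Proof.
move=> H; case: (minwt_cases P) => [e|//].
case: H => [[v Pv]|]; last by rewrite e ltnn.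
exists v; split => //; apply/eqP; rewrite eqn_leq minwt_le // e hwt_le. by [].
Qed.

Lemma minwt_len (F : finFieldType) (n : nat) (P : pred 'rV[F]_n) : (minwt P <= n)%N.
Proof. by case: (minwt_cases P) => [->|[v [_ ->]]] //; apply: hwt_le. Qed.

Lemma derive_i (F : finFieldType) (n k f1 : nat)
  (G01 : 'M[F]_(k, n)) (G1 : 'M[F]_(f1, n)) (J : {set 'I_n}) :
  row_free (col_mx G01 G1) ->
  (forall c : 'rV[F]_n, (c <= col_mx G01 G1)%MS -> ~~ (c <= G1)%MS ->
      (n - #|J| < hwt c)%N) ->
  forall (s : 'rV[F]_k) (r1 : 'rV[F]_f1),
      (forall j, j \in J -> (s *m G01 + r1 *m G1) 0 j = 0) -> s = 0.
Proof.
move=> rf H s r1 hz; apply/eqP; apply/negPn/negP => ns.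
have c0 : ((s *m G01 + r1 *m G1)%R <= col_mx G01 G1)%MS by rewrite -mul_row_col submxMl.
have c1 : ~~ ((s *m G01 + r1 *m G1)%R <= G1)%MS.
  apply/negP => /submxP [w hw].
  have : row_mx s (r1 - w) *m col_mx G01 G1 = 0 *m col_mx G01 G1.
    by rewrite mul_row_col mul0mx mulmxBl addrA hw subrr.
  move/(row_free_inj rf); rewrite -row_mx0 => /eq_row_mx [hs _].
  by rewrite hs eqxx in ns.
by have := H _ c0 c1; rewrite ltnNge (hwt_supp hz).
Qed.

Lemma derive_ii (F : finFieldType) (n k f1 e : nat)
  (G01 : 'M[F]_(k, n)) (G1 : 'M[F]_(f1, n)) (GE : 'M[F]_(e, n)) (J : {set 'I_n}) :
  (forall w : 'rV[F]_n, in_dual (col_mx G1 GE) w ->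
      ~~ in_dual (col_mx (col_mx G01 G1) GE) w -> (n - #|J| < hwt w)%N) ->
  forall s, exists u : 'rV[F]_f1 * 'rV[F]_e,
      supp_on (with_ext e J) (ecss_conf G01 G1 GE s u.1 u.2).
Proof.
move=> H s.
pose d : 'rV[F]_n := \row_j ((j \notin J)%:R : F).
pose P := diag_mx d.
have Pe : forall (X : 'rV[F]_n) j, (X *m P) 0 j = X 0 j * d 0 j.
  by move=> X j; rewrite mul_mx_diag mxE.
pose M := col_mx G1 GE *m P.
pose x := s *m G01 *m P.
case: (boolP (x <= M)%MS) => [/submxP [y hy] | nx].
  exists (- lsubmx y, - rsubmx y); apply/supp_onP => i hi.
  rewrite -(splitK i) in hi *; case: (split i) hi => j hi; last first.
    by move: hi; rewrite /= inA_r.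
  move: hi; rewrite /= inA_l => hj.
  rewrite ffunE /= split_l.
  have hd : d 0 j = 1 by rewrite mxE hj.
  have := congr1 (fun X : 'rV[F]_n => X 0 j) hy; rewrite /= /x /M mulmxA !Pe hd !mulr1.
  rewrite -{1}(hsubmxK y) mul_row_col => e1.
  have -> : s *m G01 + (- lsubmx y) *m G1 + (- rsubmx y) *m GE =
            s *m G01 - (lsubmx y *m G1 + rsubmx y *m GE).
    by rewrite !mulNmx opprD addrA.
  by rewrite rowB e1 subrr.
have nz : x *m cokermx M != 0 by rewrite -submxE.
case: (pickP (fun jj : 'I_n => (x *m cokermx M) 0 jj != 0)) => [jj hjj | none]; last first.
  move/negP: nz; case; apply/eqP/rowP => jj; move: (none jj) => /negbFE /eqP ->.
  by rewrite mxE.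
pose w := (P *m col jj (cokermx M))^T.
have wT : w^T = P *m col jj (cokermx M) by rewrite trmxK.
have hd1 : in_dual (col_mx G1 GE) w.
  by rewrite /in_dual wT mulmxA -/M colE mulmxA mulmx_coker mul0mx.
have hd2 : ~~ in_dual (col_mx (col_mx G01 G1) GE) w.
  rewrite /in_dual !mul_col_mx !col_mx_eq0; apply/negP => /andP [/andP [/eqP h0 _] _].
  have e0 : (x *m cokermx M) 0 jj = (s *m (G01 *m w^T)) 0 0.
    have gf : forall (X : 'rV[F]_n) (C : 'M[F]_n), (X *m C) 0 jj = (X *m col jj C) 0 0.
      by move=> X C; rewrite colE mulmxA -colE [RHS]mxE.
    by rewrite gf wT /x !mulmxA.
  by move: hjj; rewrite e0 h0 mulmx0 mxE eqxx.
have hs : forall j, j \in J -> w 0 j = 0.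
  by move=> j hj; rewrite mxE /w /P mul_diag_mx !mxE hj mul0r.
by have := H w hd1 hd2; rewrite ltnNge (hwt_supp hs).
Qed.

Lemma dens_pure (S : finType) (z : S) :
  is_density (fun t t' : S => ((t == z) && (t' == z))%:R : algC).
Proof.
split.
- by move=> s s'; rewrite conjC_nat andbC.
- move=> v; rewrite (sum_only (z:=z)); last first.
    by move=> y ny; apply: big1 => y' _; rewrite (negbTE ny) mulr0 mul0r.
  rewrite (sum_only (z:=z)); last first.
    by move=> y ny; rewrite eqxx (negbTE ny) mulr0 mul0r.
  by rewrite eqxx mulr1 mulrC mul_conjC_ge0.
- by rewrite (sum_only (z:=z)) ?eqxx // => y ny; rewrite (negbTE ny).
Qed.

Definition chi2 (S : finType) (z1 z2 : S) (t : S) : algC := ((t == z1) || (t == z2))%:R.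

Lemma chi2_conj (S : finType) (z1 z2 t : S) : (chi2 z1 z2 t)^* = chi2 z1 z2 t.
Proof. exact: conjC_nat. Qed.

Lemma chi2_sq (S : finType) (z1 z2 t : S) : chi2 z1 z2 t * chi2 z1 z2 t = chi2 z1 z2 t.
Proof. by rewrite /chi2; case: (_ || _); rewrite ?mulr1 ?mulr0. Qed.

Lemma chi2_sum (S : finType) (z1 z2 : S) : z1 != z2 -> \sum_t chi2 z1 z2 t = 2.
Proof.
move=> ne.
have -> : \sum_t chi2 z1 z2 t = \sum_t ((t == z1)%:R + (t == z2)%:R).
  apply: eq_bigr => t _; rewrite /chi2.
  case: (eqVneq t z1) => [-> | _]; last by rewrite add0r.
  by rewrite (negbTE ne) addr0.
rewrite big_split /= (sum_only (z:=z1)) ?eqxx; last by move=> y /negbTE ->.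
by rewrite (sum_only (z:=z2)) ?eqxx //; move=> y /negbTE ->.
Qed.

Lemma half_conj : (2^-1 : algC)^* = 2^-1.
Proof. by rewrite fmorphV /= conjC_nat. Qed.

Lemma half2 : (2^-1 * 2 : algC) = 1.
Proof. by rewrite mulVf // pnatr_eq0. Qed.

Lemma dens_full (S : finType) (z1 z2 : S) : z1 != z2 ->
  is_density (fun t t' : S => 2^-1 * chi2 z1 z2 t * chi2 z1 z2 t').
Proof.
move=> ne; split.
- move=> s s'; rewrite !rmorphM /= half_conj !chi2_conj; ring.
- move=> v.
  rewrite [X in 0 <= X](_ : _ = 2^-1 * ((\sum_s chi2 z1 z2 s * v s)^* *
                                        (\sum_s chi2 z1 z2 s * v s))); last first.
    rewrite rmorph_sum /= mulr_suml mulr_sumr; apply: eq_bigr => s _.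
    rewrite mulr_sumr mulr_sumr; apply: eq_bigr => s' _.
    rewrite rmorphM /= chi2_conj; ring.
  apply: mulr_ge0; first by rewrite invr_ge0 ler0n.
  by rewrite mulrC mul_conjC_ge0.
- under eq_bigr do rewrite -mulrA chi2_sq.
  by rewrite -mulr_sumr chi2_sum // half2.
Qed.

Lemma dens_diag (S : finType) (z1 z2 : S) : z1 != z2 ->
  is_density (fun t t' : S => 2^-1 * chi2 z1 z2 t * (t == t')%:R).
Proof.
move=> ne; split.
- move=> s s'; rewrite !rmorphM /= half_conj chi2_conj conjC_nat eq_sym.
  by case: (eqVneq s s') => [-> // | _]; rewrite !mulr0.
- move=> v; apply: sumr_ge0 => s _.
  rewrite (sum_only (z:=s)); last by move=> y ny; rewrite eq_sym (negbTE ny) !mulr0 mul0r.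
  rewrite eqxx mulr1 -mulrA [_ * v s]mulrC mulrA.
  apply: mulr_ge0; first by rewrite mulrC mul_conjC_ge0.
  by apply: mulr_ge0; [rewrite invr_ge0 ler0n | rewrite ler0n].
- under eq_bigr do rewrite eqxx mulr1.
  by rewrite -mulr_sumr chi2_sum // half2.
Qed.

Lemma sum_pure (S : finType) (z : S) (g : S -> S -> algC) :
  \sum_t \sum_t' ((t == z) && (t' == z))%:R * g t t' = g z z.
Proof.
rewrite (sum_only (z:=z)); last first.
  by move=> y ny; apply: big1 => y' _; rewrite (negbTE ny) mul0r.
rewrite (sum_only (z:=z)); last by move=> y ny; rewrite eqxx (negbTE ny) mul0r.
by rewrite eqxx mul1r.
Qed.

Lemma NR1 (F : finFieldType) (n k f1 e : nat)
  (G01 : 'M[F]_(k, n)) (G1 : 'M[F]_(f1, n)) (GE : 'M[F]_(e, n)) (J : {set 'I_n})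
  (c : 'rV[F]_n) :
  (c <= col_mx G01 G1)%MS -> ~~ (c <= G1)%MS -> (forall j, j \in J -> c 0 j = 0) ->
  ~ authorized (ecss_enc G01 G1 GE) (with_ext e J).
Proof.
move=> cF0 cF1 cJ Haut.
case/submxP: cF0 => x hx.
have hc : c = lsubmx x *m G01 + rsubmx x *m G1 by rewrite hx -{1}(hsubmxK x) mul_row_col.
move: hc; set s := lsubmx x; set r1 := rsubmx x => hc.
have ns : s != 0.
  by apply: contraNneq cF1 => s0; rewrite hc s0 mul0mx add0r submxMl.
pose cc := ecss_conf G01 G1 GE s r1 0.
have ccS : supp_on (~: with_ext e J) cc.
  apply/supp_onP => i; rewrite in_setC negbK => hi.
  rewrite -(splitK i) in hi *; case: (split i) hi => j hi; rewrite /cc ffunE /=.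
    move: hi; rewrite /= inA_l => hj.
    by rewrite split_l mul0mx addr0 -hc cJ.
  by rewrite split_r mxE.
have Teq : forall a a' : confA F (with_ext e J), Tm (ecss_enc G01 G1 GE) s s a a' = Tm (ecss_enc G01 G1 GE) 0 0 a a'.
  move=> a a'; rewrite /Tm.
  have := @sum_shift F (n + e) (~: with_ext e J) (- cc)
    (fun y => ecss_enc G01 G1 GE 0 (val a + y) * (ecss_enc G01 G1 GE 0 (val a' + y))^*)
    (supp_onN ccS).
  rewrite /= => <-; apply: eq_bigr => b _.
  by rewrite !(enc_shift _ _ _ s r1 0) -/cc !addrA.
have := no_recover Haut (dens_pure 0) (dens_pure s) _ 0 0.
rewrite eqxx eq_sym (negbTE ns) /=.
have h : forall a a', @reduce F (n + e) (with_ext e J)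
     (encode_state (ecss_enc G01 G1 GE) (fun t t' => ((t == 0) && (t' == 0))%:R)) a a' =
   @reduce F (n + e) (with_ext e J)
     (encode_state (ecss_enc G01 G1 GE) (fun t t' => ((t == s) && (t' == s))%:R)) a a'.
  by move=> a a'; rewrite !reduce_lin !sum_pure Teq.
by move/(_ h)/eqP; rewrite oner_eq0.
Qed.

Lemma NR2 (F : finFieldType) (n k f1 e : nat)
  (G01 : 'M[F]_(k, n)) (G1 : 'M[F]_(f1, n)) (GE : 'M[F]_(e, n)) (J : {set 'I_n})
  (w : 'rV[F]_n) :
  in_dual (col_mx G1 GE) w -> ~~ in_dual (col_mx (col_mx G01 G1) GE) w ->
  (forall j, j \in J -> w 0 j = 0) ->
  ~ authorized (ecss_enc G01 G1 GE) (with_ext e J).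
Proof.
move=> d1 d2 wJ Haut.
move: d1; rewrite /in_dual mul_col_mx col_mx_eq0 => /andP [/eqP h1 /eqP hE].
have h0 : G01 *m w^T != 0.
  by apply: contra d2 => /eqP h0; rewrite /in_dual !mul_col_mx h0 h1 hE !col_mx0.
case: (pickP (fun i : 'I_k => (G01 *m w^T) i 0 != 0)) => [i0 hi0 | none]; last first.
  move/negP: h0; case; apply/eqP/matrixP => i j; rewrite (ord1 j) [RHS]mxE.
  exact/eqP/negbFE/none.
pose s1 : 'rV[F]_k := delta_mx 0 i0.
have s1v : (s1 *m (G01 *m w^T)) 0 0 != 0 by rewrite /s1 -rowE mxE.
have ns1 : s1 != 0 by apply: contra s1v => /eqP ->; rewrite mul0mx mxE.
have V : forall (t t' : 'rV[F]_k) (a a' : confA F (with_ext e J)),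
    ((t - t') *m (G01 *m w^T)) 0 0 != 0 -> Tm (ecss_enc G01 G1 GE) t t' a a' = 0.
  move=> t t' a a' nz; apply: big1 => b _.
  case: (eqVneq (ecss_enc G01 G1 GE t (val a + val b)) 0) => [-> | n1].
    by rewrite mul0r.
  case: (eqVneq (ecss_enc G01 G1 GE t' (val a' + val b)) 0) => [-> | n2].
    by rewrite rmorph0 mulr0.
  exfalso; move: n1 n2 => /enc_nz [r1 [r2 e1]] /enc_nz [u1 [u2 e2]].
  have hd : ecss_conf G01 G1 GE (t - t') (r1 - u1) (r2 - u2) = val a - val a'.
    by rewrite -conf_sub -e1 -e2 opprD addrACA subrr addr0.
  pose z := (t - t') *m G01 + (r1 - u1) *m G1 + (r2 - u2) *m GE.
  have zJ : forall j, j \notin J -> z 0 j = 0.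
    move=> j hj; have := congr1 (fun f : {ffun 'I_(n + e) -> F} => f (lshift e j)) hd.
    rewrite /= ffunE split_l => ->.
    move: (valP a) (valP a') => /supp_onP ha /supp_onP ha'.
    by rewrite ffunE ha ?inA_l // ffunE ha' ?inA_l // oppr0 addr0.
  have zw : (z *m w^T) 0 0 = 0.
    rewrite mxE big1 // => j _; rewrite [w^T _ _]mxE.
    case: (boolP (j \in J)) => hj; first by rewrite wJ // mulr0.
    by rewrite zJ // mul0r.
  move: zw; rewrite /z !mulmxDl -!mulmxA h1 hE !mulmx0 !addr0 => /eqP.
  by rewrite mulNmx -mulmxBl (negbTE nz).
have ne01 : (0 : 'rV[F]_k) != s1 by rewrite eq_sym.
suff E : forall a a' : confA F (with_ext e J),
    @reduce F (n + e) (with_ext e J) (encode_state (ecss_enc G01 G1 GE)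
      (fun t t' => 2^-1 * chi2 0 s1 t * chi2 0 s1 t')) a a' =
    @reduce F (n + e) (with_ext e J) (encode_state (ecss_enc G01 G1 GE)
      (fun t t' => 2^-1 * chi2 0 s1 t * (t == t')%:R)) a a'.
  have := no_recover Haut (dens_full ne01) (dens_diag ne01) E 0 s1.
  rewrite /chi2 !eqxx orbT /= (negbTE ne01) !mulr1 mulr0 => /eqP.
  by rewrite invr_eq0 pnatr_eq0.
move=> a a'; rewrite !reduce_lin; apply: eq_bigr => t _; apply: eq_bigr => t' _.
case: (eqVneq t t') => [<- | ntt].
  have -> : (true%:R : algC) = 1 by [].
  by rewrite mulr1 -(mulrA (2^-1)) chi2_sq.
have -> : (false%:R : algC) = 0 by [].
rewrite mulr0 mul0r /chi2.
case: (boolP ((t == 0) || (t == s1))) => ht; last by rewrite mulr0 !mul0r.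
case: (boolP ((t' == 0) || (t' == s1))) => ht'; last by rewrite mulr0 mul0r.
rewrite V ?mulr0 //.
move: ntt; case/orP: ht => /eqP ->; case/orP: ht' => /eqP ->; rewrite ?eqxx // => _.
  by rewrite sub0r mulNmx mxE oppr_eq0.
by rewrite subr0.
Qed.

Lemma hwt_pos (F : finFieldType) (n : nat) (v : 'rV[F]_n) : v != 0 -> (0 < hwt v)%N.
Proof.
move=> nv; rewrite /hwt card_gt0.
case: (pickP (fun j : 'I_n => v 0 j != 0)) => [j hj | none].
  by apply/set0Pn; exists j; rewrite inE.
move/negP: nv; case; apply/eqP/rowP => j; rewrite [RHS]mxE.
exact/eqP/negbFE/none.
Qed.

Lemma card_zero (F : finFieldType) (n : nat) (v : 'rV[F]_n) :
  #|[set j : 'I_n | v 0 j == 0]| = (n - hwt v)%N.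
Proof.
rewrite /hwt; have := cardsC [set j : 'I_n | v 0 j == 0]; rewrite (card_ord n).
have -> : ~: [set j : 'I_n | v 0 j == 0] = [set j | v 0 j != 0].
  by apply/setP => j; rewrite !inE.
move=> h; by rewrite -[X in (X - _)%N]h addnK.
Qed.

Unset Implicit Arguments.

Theorem corollary1 (F : finFieldType) (n k f1 e : nat)
  (G01 : 'M[F]_(k, n)) (G1 : 'M[F]_(f1, n)) (GE : 'M[F]_(e, n)) (tau : nat) :
  (0 < k)%N ->
  row_free (col_mx G01 G1) ->
  (col_mx G01 G1 :&: GE == (0 : 'M[F]_n))%MS ->
  (forall J : {set 'I_n}, #|J| = tau ->
      authorized (ecss_enc G01 G1 GE) (with_ext e J))
  <-> (tau_e G01 G1 GE <= tau)%N.
Proof.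
move=> k0 rf hE.
rewrite /tau_e.
set d1 := wt_diff (col_mx G01 G1) G1.
set d2 := wt_dual_diff (col_mx (col_mx G01 G1) GE) (col_mx G1 GE).
have ex1 : exists c : 'rV[F]_n, (c <= col_mx G01 G1)%MS && ~~ (c <= G1)%MS.
  pose i0 : 'I_k := Ordinal k0.
  exists (delta_mx 0 i0 *m G01); apply/andP; split.
    apply: submx_trans (submxMl _ _) _; rewrite -addsmxE; exact: addsmxSl.
  apply/negP => /submxP [w hw].
  have : row_mx (delta_mx 0 i0) (- w) *m col_mx G01 G1 = 0 *m col_mx G01 G1.
    by rewrite mul_row_col mul0mx hw mulNmx subrr.
  move/(row_free_inj rf); rewrite -row_mx0 => /eq_row_mx [hd _].
  by move: (congr1 (fun M : 'rV[F]_k => M 0 i0) hd); rewrite !mxE !eqxx /= => /eqP; rewrite oner_eq0.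
have dl1 : (d1 <= n)%N := minwt_len _.
have dl2 : (d2 <= n)%N := minwt_len _.
split.
  move=> H; rewrite leqNgt; apply/negP => lt.
  case: (leqP d1 d2) => hd.
    have [c [Pc wc]] := minwt_ex (or_introl ex1).
    have wc' : d1 = hwt c := wc.
    case/andP: Pc => c0 c1.
    have [J [sJ cJ]] : exists J : {set 'I_n}, J \subset [set j : 'I_n | c 0 j == 0] /\ #|J| = tau.
      apply: (@pick_J n [set j : 'I_n | c 0 j == 0] tau); rewrite card_zero -wc'; move: lt; rewrite (minn_idPl hd); lia.
    have cJ0 : forall j, j \in J -> c 0 j = 0.
      by move=> j hj; move/subsetP: sJ => /(_ j hj); rewrite inE => /eqP.
    exact: (NR1 c0 c1 cJ0 (H J cJ)).
  have [w [Pw ww]] := minwt_ex (or_intror (leq_trans hd dl1)).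
  have ww' : d2 = hwt w := ww.
  case/andP: Pw => w1 w2.
  have [J [sJ cJ]] : exists J : {set 'I_n}, J \subset [set j : 'I_n | w 0 j == 0] /\ #|J| = tau.
    apply: (@pick_J n [set j : 'I_n | w 0 j == 0] tau); rewrite card_zero -ww'; move: lt; rewrite (minn_idPr (ltnW hd)); lia.
  have wJ0 : forall j, j \in J -> w 0 j = 0.
    by move=> j hj; move/subsetP: sJ => /(_ j hj); rewrite inE => /eqP.
  exact: (NR2 w1 w2 wJ0 (H J cJ)).
move=> le J hJ; apply: recover => //.
  apply: derive_i => // c c0 c1.
  have hc : (d1 <= hwt c)%N by apply: minwt_le; rewrite /= c0 c1.
  have pc : (0 < hwt c)%N.
    by apply: hwt_pos; apply: contra c1 => /eqP ->; rewrite sub0mx.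
  rewrite hJ; move: le hc pc; lia.
apply: derive_ii => w w1 w2.
have hw : (d2 <= hwt w)%N by apply: minwt_le; rewrite /= w1 w2.
have pw : (0 < hwt w)%N.
  by apply: hwt_pos; apply: contra w2 => /eqP ->; rewrite /in_dual trmx0 mulmx0.
rewrite hJ; move: le hw pw; lia.
Qed.
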